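(* Let $\delta$ be the differential defined in the context. Then: (1) $\ker(\delta:\mathfrak{lie}_1\to\mathfrak{lie}_2)=\mathfrak{lie}_1$; (2) $\ker(\delta:\mathfrak{tr}_1\to\mathfrak{tr}_2)=k\,\mathrm{Tr}(x)$; (3) $\ker(\delta:\mathfrak{lie}_2\to\mathfrak{lie}_3)/\mathrm{im}(\delta:\mathfrak{lie}_1\to\mathfrak{lie}_2)$ is one-dimensional, spanned by the class of $[x,y]$; (4) $\ker(\delta:\mathfrak{tr}_2\to\mathfrak{tr}_3)=\mathrm{im}(\delta:\mathfrak{tr}_1\to\mathfrak{tr}_2)$.
   Context: Let $k$ be a field of characteristic zero. For $n\ge 1$, $\mathfrak{lie}_n$ is the degree completion of the free Lie algebra over $k$ on generators $x_1,\dots,x_n$ (graded by word length), and $\mathrm{Ass}_n$ is the degree completion of the free associative algebra on $x_1,\dots,x_n$; for small $n$ the generators are written $x,y,z,w$. Let $\mathrm{Ass}_n^+$ be its part of positive degree and $\mathfrak{tr}_n=\mathrm{Ass}_n^+/\langle ab-ba : a,b\in\mathrm{Ass}_n\rangle$ (quotient by the closed span of commutators), a graded vector space; $\mathrm{Tr}:\mathrm{Ass}_n\to\mathfrak{tr}_n$ denotes the projection (killing constants). For an element $f(x_1,\dots,x_n)$ of $\mathfrak{lie}_n$ or $\mathfrak{tr}_n$, expressions such as $f(x_1,\dots,x_i+x_{i+1},\dots,x_{n+1})$ denote the image under the continuous algebra homomorphism substituting the indicated elements for the generators. The differential $\delta:\mathfrak{lie}_n\to\mathfrak{lie}_{n+1}$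 (and likewise $\delta:\mathfrak{tr}_n\to\mathfrak{tr}_{n+1}$) is $(\delta f)(x_1,\dots,x_{n+1})=f(x_2,\dots,x_{n+1})+\sum_{i=1}^n(-1)^i f(x_1,\dots,x_i+x_{i+1},\dots,x_{n+1})+(-1)^{n+1}f(x_1,\dots,x_n)$. *)

(* Defs.v *)
From HB Require Import structures.
From mathcomp Require Import all_boot all_order all_algebra.
Set Implicit Arguments. Unset Strict Implicit. Unset Printing Implicit Defensive.
Import Order.TTheory GRing.Theory Num.Theory.
Local Open Scope ring_scope.

(* Elements of the degree completion Ass_n of the free associative algebra
   k<<x_0,...,x_{n-1}>>: formal noncommutative power series, i.e. arbitrary
   coefficient functions on words (seq 'I_n). *)
Definition series (K : Type) (n : nat) := seq 'I_n -> K.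

Section Series.
Context {K : fieldType}.

Definition szero {n} : series K n := fun _ => 0.
Definition sadd {n} (f g : series K n) : series K n := fun w => f w + g w.
Definition sopp {n} (f : series K n) : series K n := fun w => - f w.
Definition sscale {n} (c : K) (f : series K n) : series K n := fun w => c * f w.
Definition smul {n} (f g : series K n) : series K n :=
  fun w => \sum_(i < (size w).+1) f (take i w) * g (drop i w).
Definition sbr {n} (f g : series K n) : series K n :=
  fun w => smul f g w - smul g f w.
Definition gen {n} (i : 'I_n) : series K n := fun w => (w == [:: i])%:R.
Definition hom {n} (d : nat) (f : series K n) : series K n :=
  fun w => if size w == d then f w else 0.

(* Continuous algebra homomorphism Ass_n -> Ass_m given by the linear
   substitution x_j |-> \sum_l M j l * x_l. *)
Definition lsubst {n m} (M : 'I_n -> 'I_m -> K) (f : series K n) : series K m :=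
  fun w => \sum_(t : (size w).-tuple 'I_n)
             f t * \prod_(i < size w) M (tnth t i) (tnth (in_tuple w) i).

(* The i-th face substitution 'I_n -> 'I_n.+1 (0 <= i <= n+1):
   i = 0     : x_j |-> x_{j+1}                     (f(x_2,...,x_{n+1}))
   1<=i<=n   : x_j |-> x_j (j < i), x_i |-> x_i + x_{i+1}, x_j |-> x_{j+1} (j > i)
               (1-based indices; f(x_1,..,x_i+x_{i+1},..,x_{n+1}))
   i = n+1   : x_j |-> x_j                          (f(x_1,...,x_n)) *)
Definition face (n i : nat) (j : 'I_n) (l : 'I_n.+1) : K :=
  (if (j.+1 < i)%N then (l : nat) == j
   else if j.+1 == i then ((l : nat) == j) || ((l : nat) == j.+1)
   else (l : nat) == j.+1)%:R.

(* The differential delta : Ass_n -> Ass_{n+1} (restricting to lie_n / inducing on tr_n) *)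
Definition delta {n} (f : series K n) : series K n.+1 :=
  fun w => \sum_(i < n.+2) (-1) ^+ i * lsubst (@face n i) f w.

(* Lie polynomials: the Lie subalgebra of the free associative algebra
   generated by the x_i (= the free Lie algebra, embedded in Ass_n). *)
Inductive lie_poly {n} : series K n -> Prop :=
  | lp_gen i : lie_poly (gen i)
  | lp_zero : lie_poly szero
  | lp_add f g : lie_poly f -> lie_poly g -> lie_poly (sadd f g)
  | lp_scale c f : lie_poly f -> lie_poly (sscale c f)
  | lp_br f g : lie_poly f -> lie_poly g -> lie_poly (sbr f g).

(* Elements of lie_n = degree completion of the free Lie algebra:
   series all of whose homogeneous components are Lie polynomials. *)
Definition is_lie {n} (f : series K n) : Prop := forall d, lie_poly (hom d f).

Definition spos {n} (f : series K n) : series K n :=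
  fun w => if w is [::] then 0 else f w.

(* f lies in the closure (for the degree topology) of the span of
   commutators ab - ba, a, b in Ass_n. *)
Definition in_comm_closure {n} (f : series K n) : Prop :=
  forall N : nat, exists s : seq (series K n * series K n),
    forall w, (size w <= N)%N ->
      f w = \sum_(p <- s) (smul p.1 p.2 w - smul p.2 p.1 w).

(* Tr f = 0 in tr_n = Ass_n^+ / closure of commutators *)
Definition tr_zero {n} (f : series K n) : Prop := in_comm_closure (spos f).

End Series.

(* Main.v *)
Require Import Defs.
From HB Require Import structures.
From mathcomp Require Import all_boot all_order all_algebra.
From Stdlib Require Import FunctionalExtensionality.
From mathcomp Require Import zify ring.
Import Order.TTheory GRing.Theory Num.Theory.
Local Open Scope ring_scope.

Set Implicit Arguments.
Unset Strict Implicit.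

Section Gen.
Variable K : fieldType.

Definition Psi {n} (v : seq 'I_n) (h : series K n) : K :=
  \sum_(k < size v) h (rot k v).

Lemma Psi_ext n (v : seq 'I_n) (h1 h2 : series K n) :
  (forall w, h1 w = h2 w) -> Psi v h1 = Psi v h2.
Proof. by move=> e; apply: eq_bigr => k _; rewrite e. Qed.

Lemma Psi_rot1 n (u : seq 'I_n) (h : series K n) : Psi (rot 1 u) h = Psi u h.
Proof.
rewrite /Psi size_rot.
case: u => [|x s]; first by rewrite !big_ord0.
rewrite big_ord_recr /= big_ord_recl /= rot0.
have -> : rot (size s) (rot 1 (x :: s)) = x :: s.
  by rewrite -rotD ?addn1 // rot_oversize.
rewrite addrC; congr (_ + _); apply: eq_bigr => k _.
rewrite /bump /= add1n -rotD ?addn1 //=; exact: leqW (ltn_ord k).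
Qed.

Lemma Psi_rot n (u : seq 'I_n) (h : series K n) i :
  (i <= size u)%N -> Psi (rot i u) h = Psi u h.
Proof.
elim: i => [|i IH] Hi; first by rewrite rot0.
by rewrite rotS // Psi_rot1 IH // ltnW.
Qed.

Lemma Psi_rotk n (v : seq 'I_n) (H : series K n) i : (i <= size v)%N ->
  \sum_(k < size v) H (rot i (rot k v)) = Psi v H.
Proof.
move=> Hi; rewrite -(@Psi_rot n v H i Hi) /Psi size_rot.
by apply: eq_bigr => k _; rewrite rot_rot.
Qed.

Lemma Psi_comm n (v : seq 'I_n) (a b : series K n) :
  Psi v (smul a b) = Psi v (smul b a).
Proof.
rewrite /Psi /smul.
set d := size v.
have E : forall (F : seq 'I_n -> seq 'I_n -> K),
  \sum_(k < d) \sum_(i < (size (rot k v)).+1) F (take i (rot k v)) (drop i (rot k v))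
  = \sum_(i < d.+1) \sum_(k < d) F (take i (rot k v)) (drop i (rot k v)).
  move=> F; rewrite [RHS]exchange_big /=; apply: eq_bigr => k _.
  by rewrite size_rot.
rewrite (E (fun x y => a x * b y)) (E (fun x y => b x * a y)).
rewrite [RHS](reindex_inj rev_ord_inj) /=; apply: eq_bigr => i _.
have Hi : (d - i <= d)%N by apply: leq_subr.
transitivity (Psi v (fun u => a (take i u) * b (drop i u))); first by [].
rewrite -(@Psi_rotk n v _ _ Hi); apply: eq_bigr => k _.
set u := rot k v.
have Hu : size u = d by rewrite size_rot.
have Hs : size (drop (d - i) u) = i.
  rewrite size_drop Hu; have := ltn_ord i; rewrite /d => lt; lia.
by rewrite /rot take_size_cat // drop_size_cat // mulrC subSS.
Qed.

Lemma Psi_add n (v : seq 'I_n) (f g : series K n) :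
  Psi v (sadd f g) = Psi v f + Psi v g.
Proof. by rewrite /Psi -big_split. Qed.

Lemma Psi_opp n (v : seq 'I_n) (f : series K n) : Psi v (sopp f) = - Psi v f.
Proof. by rewrite /Psi -sumrN. Qed.

Lemma Psi_scale n (v : seq 'I_n) c (f : series K n) :
  Psi v (sscale c f) = c * Psi v f.
Proof. by rewrite /Psi mulr_sumr. Qed.

Lemma TZ_imp n (h : series K n) :
  tr_zero h -> forall v, v != [::] -> Psi v h = 0.
Proof.
move=> Hh v Hv; have [s Hs] := Hh (size v).
transitivity (Psi v (spos h)).
  apply: eq_bigr => k _; rewrite /spos; case E: (rot k v) => [|x w] //.
  have := size_rot k v; rewrite E => /esym/eqP; rewrite size_eq0 (negbTE Hv).
  by [].
rewrite /Psi (eq_bigr (fun k : 'I_(size v) => \sum_(p <- s)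
      (smul p.1 p.2 (rot k v) - smul p.2 p.1 (rot k v)))); last first.
  by move=> k _; rewrite Hs // size_rot.
rewrite exchange_big /= big1 // => p _.
rewrite sumrB.
have := Psi_comm v p.1 p.2; rewrite /Psi => ->.
by rewrite subrr.
Qed.

Definition mono {n} (a : seq 'I_n) : series K n := fun w => (w == a)%:R.

Lemma smul_mono n (a b u : seq 'I_n) : smul (mono a) (mono b) u = (u == a ++ b)%:R.
Proof.
rewrite /smul /mono.
have [->|Hne] := eqVneq u (a ++ b).
  rewrite ?eqxx.
  have Ha : (size a < (size (a ++ b)).+1)%N by rewrite size_cat ltnS leq_addr.
  rewrite (bigD1 (Ordinal Ha)) //= take_size_cat // drop_size_cat // !eqxx mulr1.
  rewrite big1 ?addr0 // => i Hi.
  have -> : (take i (a ++ b) == a) = false.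
    apply/negbTE/eqP => Ht; move: Hi; apply/negP; rewrite negbK.
    apply/eqP/val_inj => /=.
    have := congr1 size Ht; rewrite size_take.
    have H1 := ltn_ord i; move: (i : nat) H1 => j H1.
    rewrite !size_cat in H1 *; case: ltnP => H3 H2; first exact: H2.
    have H4 : (size a + size b = size a)%N := H2; lia.
  by rewrite mul0r.
rewrite big1 // => i _.
case: eqP => Ht; case: eqP => Hd //=; rewrite ?mul0r ?mulr0 //.
by exfalso; move/eqP: Hne; apply; rewrite -Ht -Hd cat_take_drop.
Qed.

Lemma smul_scalel n c (f g : series K n) u :
  smul (sscale c f) g u = c * smul f g u.
Proof.
rewrite /smul /sscale mulr_sumr; apply: eq_bigr => i _; by rewrite mulrA.
Qed.

Lemma smul_scaler n c (f g : series K n) u :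
  smul f (sscale c g) u = c * smul f g u.
Proof.
rewrite /smul /sscale mulr_sumr; apply: eq_bigr => i _; by rewrite mulrCA.
Qed.

Definition words n d : seq (seq 'I_n) :=
  map (fun t : d.-tuple 'I_n => tval t) (enum {: d.-tuple 'I_n}).

Lemma mem_words n d (w : seq 'I_n) : (w \in words n d) = (size w == d).
Proof.
apply/idP/idP.
  by case/mapP => t _ ->; rewrite size_tuple.
move=> /eqP Hw; apply/mapP; exists (Tuple (introT eqP Hw)) => //.
by rewrite mem_enum.
Qed.

Lemma uniq_words n d : uniq (words n d).
Proof. by rewrite map_inj_uniq ?enum_uniq //; exact: val_inj. Qed.

Lemma sum_count (T : eqType) (r : seq T) (u : T) (F : T -> K) :
  \sum_(x <- r) (x == u)%:R * F x = (count_mem u r)%:R * F u.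
Proof.
elim: r => [|x r IH]; first by rewrite big_nil mul0r.
rewrite big_cons IH /= natrD mulrDl; congr (_ + _).
by case: eqP => [->|_]; rewrite ?mul0r // eq_sym.
Qed.

Lemma sum_const_iota m (x : K) : \sum_(k <- iota 0 m) x = x *+ m.
Proof. by move: (sumr_const_nat m 0 x); rewrite /index_iota subn0. Qed.

Lemma Psi_rotr n (u : seq 'I_n) (h : series K n) :
  \sum_(k < size u) h (rotr k u) = Psi u h.
Proof.
rewrite -Psi_rot1 /Psi size_rot (reindex_inj rev_ord_inj) /=.
apply: eq_bigr => k _; rewrite /rotr.
have Hk := ltn_ord k.
have -> : (size u - (size u - k.+1) = k + 1)%N by lia.
by rewrite rotD // addn1.
Qed.

Lemma sum_iota_ord m (F : nat -> K) : \sum_(k <- iota 0 m) F k = \sum_(k < m) F k.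
Proof. by rewrite -(big_mkord xpredT) /index_iota subn0. Qed.

Lemma natr_nz (hK : [pchar K] =i pred0) m : (0 < m)%N -> (m%:R : K) != 0.
Proof. by move=> Hm; rewrite ((pcharf0P K).1 hK) -lt0n. Qed.

Lemma TZ_of n (h : series K n) : [pchar K] =i pred0 ->
  (forall v, v != [::] -> Psi v h = 0) -> tr_zero h.
Proof.
move=> hK HP N.
pose W := flatten [seq words n d | d <- iota 1 N].
exists [seq (sscale (h w / (size w)%:R) (mono (take k w)), mono (drop k w))
         | w <- W, k <- iota 0 (size w)].
move=> u Hu.
rewrite big_allpairs_dep /= big_flatten /= big_map.
transitivity (\sum_(d <- iota 1 N) \sum_(w <- words n d)
   ((w == u)%:R * h w - \sum_(k < d) (w == rotr k u)%:R * (h w / d%:R))); last first.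
  apply: eq_big_seq => d Hd; apply: eq_big_seq => w Hw.
  have Hwd : size w = d by move: Hw; rewrite mem_words => /eqP.
  have d0 : (0 < d)%N by move: Hd; rewrite mem_iota => /andP [].
  rewrite Hwd.
  under eq_bigr => k _ do rewrite smul_scalel smul_scaler !smul_mono cat_take_drop -/(rot k w) -mulrBr.
  rewrite -mulr_sumr sumrB sum_const_iota mulrBr; congr (_ - _).
    by rewrite -[(u == w)%:R *+ d]mulr_natr [RHS]mulrCA divfK ?natr_nz // eq_sym.
  rewrite sum_iota_ord mulr_sumr; apply: eq_bigr => k _; rewrite mulrC; congr (_ * _).
  congr (_%:R); congr (nat_of_bool _).
  by apply/idP/idP => /eqP ->; rewrite ?rotK ?rotrK.
under eq_bigr => d _ do rewrite sumrB.
rewrite sumrB.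
rewrite (eq_bigr (fun d => (d == size u)%:R * h u)); last first.
  move=> d _; rewrite sum_count count_uniq_mem ?uniq_words // mem_words.
  by rewrite eq_sym.
rewrite sum_count count_uniq_mem ?iota_uniq // big1_seq ?subr0; last first.
  move=> d /andP [_ Hd].
  have d0 : (0 < d)%N by move: Hd; rewrite mem_iota => /andP [].
  rewrite exchange_big /=.
  under eq_bigr => k _ do rewrite sum_count count_uniq_mem ?uniq_words // mem_words size_rotr.
  have [Hs|Hs] := eqVneq (size u) d; last first.
    by rewrite big1 // => k _; rewrite mul0r.
  under eq_bigr => k _ do rewrite mul1r mulrC.
  rewrite -mulr_sumr -Hs Psi_rotr HP ?mulr0 //.
  by rewrite -size_eq0 Hs -lt0n.
rewrite mem_iota /spos; case: u Hu => [|x w] Hu /=; first by rewrite mul0r.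
by rewrite add1n ltnS Hu mul1r.
Qed.
End Gen.

Section S2.
Variable K : fieldType.

Lemma prod_bool (T : Type) (r : seq T) (p : pred T) :
  \prod_(x <- r) ((p x)%:R : K) = (all p r)%:R.
Proof.
elim: r => [|x r IH]; first by rewrite big_nil.
by rewrite big_cons IH /= -natrM mulnb.
Qed.

Lemma lsubst_fun n m (M : 'I_n -> 'I_m -> K) (sig : 'I_m -> 'I_n) (r : pred 'I_m)
  (f : series K n) w :
  (forall j l, M j l = ((j == sig l) && r l)%:R) ->
  lsubst M f w = (all r w)%:R * f (map sig w).
Proof.
move=> HM; rewrite /lsubst.
rewrite (bigD1 [tuple of map sig (in_tuple w)]) //= [X in _ + X]big1 ?addr0.
  rewrite mulrC; congr (_ * _).
  rewrite -prod_bool (big_tnth _ _ w) /=.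
  by apply: eq_bigr => i _; rewrite HM tnth_map eqxx.
move=> t Ht.
case: (pickP (fun i => tnth t i != sig (tnth (in_tuple w) i))) => [i Hi|H].
  by rewrite (bigD1 i) //= HM (negbTE Hi) /= mul0r mulr0.
move/negP: Ht; case.
apply/eqP/eq_from_tnth => i; rewrite tnth_map; apply/eqP.
by have := H i => /negbFE.
Qed.

Definition tau (l : 'I_3) : 'I_2 := if (l : nat) == 2%N then ord_max else ord0.
Definition rho (l : 'I_3) : 'I_2 := if (l : nat) == 0%N then ord0 else ord_max.
Definition nz0 (l : 'I_3) : bool := (l : nat) != 0%N.
Definition nz2 (l : 'I_3) : bool := (l : nat) != 2%N.

Lemma face2_0 (j : 'I_2) (l : 'I_3) : @face K 2 0 j l = ((j == tau l) && nz0 l)%:R :> K.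
Proof. by case: j => [[|[|j]] Hj]; case: l => [[|[|[|l]]] Hl]. Qed.
Lemma face2_1 (j : 'I_2) (l : 'I_3) : @face K 2 1 j l = ((j == tau l) && true)%:R :> K.
Proof. by case: j => [[|[|j]] Hj]; case: l => [[|[|[|l]]] Hl]. Qed.
Lemma face2_2 (j : 'I_2) (l : 'I_3) : @face K 2 2 j l = ((j == rho l) && true)%:R :> K.
Proof. by case: j => [[|[|j]] Hj]; case: l => [[|[|[|l]]] Hl]. Qed.
Lemma face2_3 (j : 'I_2) (l : 'I_3) : @face K 2 3 j l = ((j == rho l) && nz2 l)%:R :> K.
Proof. by case: j => [[|[|j]] Hj]; case: l => [[|[|[|l]]] Hl]. Qed.

Lemma delta2E (f : series K 2) w :
  delta f w = ((all nz0 w)%:R - 1) * f (map tau w)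
            + (1 - (all nz2 w)%:R) * f (map rho w).
Proof.
rewrite /delta !big_ord_recl big_ord0 /=.
rewrite (lsubst_fun _ _ face2_0) (lsubst_fun _ _ face2_1).
rewrite (lsubst_fun _ _ face2_2) (lsubst_fun _ _ face2_3).
have AT : all xpredT w by apply/allP.
rewrite AT /bump /=. ring.
Qed.

Definition nzz0 (l : 'I_2) : bool := (l : nat) != 0%N.
Definition nzz1 (l : 'I_2) : bool := (l : nat) != 1%N.

Lemma face1_0 (j : 'I_1) (l : 'I_2) : @face K 1 0 j l = ((j == (fun _ => ord0) l) && nzz0 l)%:R :> K.
Proof. by case: j => [[|j] Hj]; case: l => [[|[|l]] Hl]. Qed.
Lemma face1_1 (j : 'I_1) (l : 'I_2) : @face K 1 1 j l = ((j == (fun _ => ord0) l) && true)%:R :> K.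
Proof. by case: j => [[|j] Hj]; case: l => [[|[|l]] Hl]. Qed.
Lemma face1_2 (j : 'I_1) (l : 'I_2) : @face K 1 2 j l = ((j == (fun _ => ord0) l) && nzz1 l)%:R :> K.
Proof. by case: j => [[|j] Hj]; case: l => [[|[|l]] Hl]. Qed.

Lemma I1_nseq (u : seq 'I_1) : u = nseq (size u) ord0.
Proof. by elim: u => //= x u IH; rewrite -IH (ord1 x). Qed.

Lemma delta1E (g : series K 1) (w : seq 'I_2) :
  delta g w = ((all nzz0 w)%:R - 1 + (all nzz1 w)%:R) * g (nseq (size w) ord0).
Proof.
rewrite /delta !big_ord_recl big_ord0 /=.
rewrite (lsubst_fun _ _ face1_0) (lsubst_fun _ _ face1_1) (lsubst_fun _ _ face1_2).
have AT : all xpredT w by apply/allP.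
have -> : map (fun _ : 'I_2 => (ord0 : 'I_1)) w = nseq (size w) ord0.
  by rewrite (I1_nseq (map _ w)) size_map.
rewrite AT /bump /=. ring.
Qed.
End S2.

Section S3.
Variable K : fieldType.
Hypothesis hK : [pchar K] =i pred0.

Lemma lie_nil n (P : series K n) : lie_poly P -> P [::] = 0.
Proof.
elim => [i| |f g _ Hf _ Hg|c f _ Hf|f g _ Hf _ Hg] //=.
- by rewrite /sadd Hf Hg addr0.
- by rewrite /sscale Hf mulr0.
- by rewrite /sbr /smul !big_ord1 /= Hf mul0r mulr0 subrr.
Qed.

Lemma lie_Psi n (P : series K n) : lie_poly P -> forall v, (2 <= size v)%N -> Psi v P = 0.
Proof.
elim => [i| |f g _ Hf _ Hg|c f _ Hf|f g _ Hf _ Hg] v Hv.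
- rewrite /Psi big1 // => k _; rewrite /gen.
  have : rot k v != [:: i].
    by apply/eqP => E; have := size_rot k v; rewrite E /= => E2; rewrite -E2 in Hv.
  by move/negbTE ->.
- by rewrite /Psi big1.
- by rewrite Psi_add Hf // Hg // addr0.
- by rewrite Psi_scale Hf // mulr0.
- rewrite /sbr; have := Psi_comm v f g; rewrite /Psi => E.
  by rewrite sumrB E subrr.
Qed.

Lemma is_lie_nil n (f : series K n) : is_lie f -> f [::] = 0.
Proof. by move=> H; have := lie_nil (H 0%N); rewrite /Defs.hom /=. Qed.

Lemma is_lie_Psi n (f : series K n) v : is_lie f -> (2 <= size v)%N -> Psi v f = 0.
Proof.
move=> H Hv; rewrite -(lie_Psi (H (size v)) Hv) /Psi; apply: eq_bigr => k _.
by rewrite /Defs.hom size_rot eqxx.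
Qed.

Lemma all_rot (T : Type) (a : pred T) k (s : seq T) : all a (rot k s) = all a s.
Proof.
by rewrite /rot all_cat andbC -all_cat cat_take_drop.
Qed.

Lemma Psi_I1 (v : seq 'I_1) (h : series K 1) : Psi v h = (size v)%:R * h v.
Proof.
rewrite /Psi (eq_bigr (fun _ => h v)) ?sumr_const ?card_ord ?mulr_natl // => k _.
by rewrite (I1_nseq (rot k v)) size_rot -I1_nseq.
Qed.

Lemma Psi_delta1 (g : series K 1) (u : seq 'I_2) :
  Psi u (delta g) = (size u)%:R * (((all nzz0 u)%:R - 1 + (all nzz1 u)%:R) * g (nseq (size u) ord0)).
Proof.
rewrite /Psi (eq_bigr (fun _ => ((all nzz0 u)%:R - 1 + (all nzz1 u)%:R) * g (nseq (size u) ord0))).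
  by rewrite sumr_const card_ord mulr_natl.
by move=> k _; rewrite delta1E !all_rot size_rot.
Qed.

Lemma tr_zero_of0 n (h : series K n) : (forall w, w != [::] -> h w = 0) -> tr_zero h.
Proof.
move=> H N; exists [::] => w _; rewrite big_nil /spos.
by case: w => // x w; rewrite H.
Qed.

Lemma mulf_nat0 m (x : K) : (0 < m)%N -> m%:R * x = 0 -> x = 0.
Proof. by move=> Hm /eqP; rewrite mulf_eq0 (negbTE (natr_nz hK Hm)) => /eqP. Qed.

Lemma part1 (f : series K 1) : is_lie f -> delta f = szero.
Proof.
move=> Hf; apply: functional_extensionality => w; rewrite delta1E /szero.
case: w => [|l w]; first by rewrite /= is_lie_nil // mulr0.
case: w => [|l' w].
  by case: l => [[|[|?]] Hl] //=; rewrite ?mul0r ?subrr ?add0r ?mul0r //; ring.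
have Hd : (2 <= size [:: l, l' & w])%N by [].
have := @is_lie_Psi 1 f (nseq (size [:: l, l' & w]) ord0) Hf.
rewrite size_nseq => /(_ Hd); rewrite Psi_I1 size_nseq => /mulf_nat0 -> //; first by rewrite mulr0.
Qed.

Lemma nseq_neq1 (T : eqType) d (x y : T) : (2 <= d)%N -> (nseq d x == [:: y]) = false.
Proof. by case: d => [|[|d]] // _; rewrite eqseq_cons andbF. Qed.

Lemma part2 (f : series K 1) :
  tr_zero (delta f) <->
  exists c : K, tr_zero (sadd f (sopp (sscale c (gen (ord0 : 'I_1))))).
Proof.
split.
  move=> H; exists (f [:: ord0]); apply: tr_zero_of0 => w Hw.
  rewrite /sadd /sopp /sscale /gen (I1_nseq w).
  case: w Hw => [|x w] // _ /=.
  case: w => [|y w]; first by rewrite /= mulr1 subrr.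
  set d := (size w).+2.
  pose vm : seq 'I_2 := ord0 :: nseq d.-1 ord_max.
  have := TZ_imp H (v:=vm) erefl.
  rewrite Psi_delta1 /vm /= size_nseq => /(mulf_nat0 (ltn0Sn _)).
  rewrite sub0r addr0 mulN1r => /eqP; rewrite oppr_eq0 => /eqP ->.
  by rewrite mulr0 subr0.
case=> c Hc.
have Hf : forall d, (2 <= d)%N -> f (nseq d ord0) = 0.
  move=> d Hd; have := TZ_imp Hc (v:=nseq d ord0).
  rewrite -size_eq0 size_nseq -lt0n (leq_trans _ Hd) // => /(_ erefl).
  rewrite Psi_I1 size_nseq => /(mulf_nat0 (leq_trans (isT : (1 <= 2)%N) Hd)).
  by rewrite /sadd /sopp /sscale /gen nseq_neq1 // mulr0 subr0.
apply: tr_zero_of0 => w Hw; rewrite delta1E.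
case: w Hw => [|l w] // _.
case: w => [|l' w].
  by case: l => [[|[|?]] Hl] //=; rewrite ?mul0r ?subrr ?add0r ?mul0r //; ring.
by rewrite Hf ?mulr0.
Qed.
End S3.

Section S4.
Variable K : fieldType.

Definition cocyc (F : seq 'I_2 -> K) := forall v : seq 'I_3, v != [::] ->
  ((all nz0 v)%:R - 1) * F (map tau v) + (1 - (all nz2 v)%:R) * F (map rho v) = 0.

Definition l1 : 'I_3 := Ordinal (isT : (1 < 3)%N).

Lemma I2_cases (x : 'I_2) : x = ord0 \/ x = ord_max.
Proof. by case: x => [[|[|?]] Hx]; [left|right|]; try apply: val_inj. Qed.

Lemma I3_cases (x : 'I_3) : [\/ x = ord0, x = l1 | x = ord_max].
Proof. by case: x => [[|[|[|?]]] Hx]; [apply: Or31|apply: Or32|apply: Or33|]; try apply: val_inj. Qed.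

Lemma I2_neq0 (x : 'I_2) : x != ord0 -> x = ord_max.
Proof. by case: (I2_cases x) => ->. Qed.

Lemma C_pure0 F d : cocyc F -> (0 < d)%N -> F (nseq d ord0) = 0.
Proof.
move=> H Hd; have := H (nseq d (ord0 : 'I_3)).
rewrite -size_eq0 size_nseq -lt0n Hd => /(_ isT).
rewrite !map_nseq !all_nseq -[d == 0%N]negbK -lt0n Hd /=.
by rewrite subrr mul0r addr0 sub0r mulN1r => /eqP; rewrite oppr_eq0 => /eqP.
Qed.

Lemma C_pure1 F d : cocyc F -> (0 < d)%N -> F (nseq d ord_max) = 0.
Proof.
move=> H Hd; have := H (nseq d (ord_max : 'I_3)).
rewrite -size_eq0 size_nseq -lt0n Hd => /(_ isT).
rewrite !map_nseq !all_nseq -[d == 0%N]negbK -lt0n Hd /=.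
by rewrite subrr mul0r add0r subr0 mul1r.
Qed.

Definition zz d p : seq 'I_2 := mkseq (fun k => if k == p then ord_max else ord0) d.

Lemma C_flip F (u : seq 'I_2) (P : pred nat) k0 k1 : cocyc F ->
  (k0 < size u)%N -> nth ord0 u k0 = ord0 ->
  (k1 < size u)%N -> nth ord0 u k1 = ord_max -> ~~ P k1 ->
  F u = F (mkseq (fun k => if (nth ord0 u k == ord0) || P k then ord0 else ord_max) (size u)).
Proof.
move=> H Hk0 Hu0 Hk1 Hu1 HP.
pose v := mkseq (fun k => if nth ord0 u k == ord0 then (ord0 : 'I_3)
                          else if P k then l1 else ord_max) (size u).
have Hv : v != [::] by rewrite -size_eq0 size_mkseq -lt0n (leq_ltn_trans _ Hk0).
have := H v Hv.
have -> : all nz0 v = false.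
  apply/negbTE/negP => /(all_nthP ord0) Hall.
  by have := Hall k0; rewrite size_mkseq nth_mkseq // Hu0 eqxx => /(_ Hk0).
have -> : all nz2 v = false.
  apply/negbTE/negP => /(all_nthP ord0) Hall.
  have := Hall k1; rewrite size_mkseq nth_mkseq // Hu1 (negbTE HP) => /(_ Hk1).
  by [].
have -> : map rho v = u.
  transitivity (mkseq (nth ord0 u) (size u)); last exact: mkseq_nth.
  rewrite /v /mkseq -map_comp; apply: eq_map => k /=.
  case: eqP => [->|/eqP Hne] //; rewrite (I2_neq0 Hne).
  by case: (P k).
rewrite sub0r subr0 mulN1r mul1r addrC => /eqP; rewrite subr_eq0 => /eqP ->.
congr F; rewrite /v /mkseq -map_comp; apply: eq_map => k /=.
by case: eqP => //= _; case: (P k).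
Qed.

Lemma C_single F (u : seq 'I_2) p : cocyc F -> has (pred1 ord0) u ->
  (p < size u)%N -> nth ord0 u p = ord_max -> F u = F (zz (size u) p).
Proof.
move=> H /(has_nthP ord0) [k0 Hk0 /eqP Hu0] Hp Hup.
rewrite (@C_flip F u (fun k => k != p) k0 p H Hk0 Hu0 Hp Hup) ?eqxx //.
congr F; apply: eq_mkseq => k.
case: (eqVneq k p) => [->|Hkp]; first by rewrite Hup.
by rewrite orbT.
Qed.

Lemma C_two F d p q : cocyc F -> (3 <= d)%N -> (p < d)%N -> (q < d)%N ->
  F (zz d p) = F (zz d q).
Proof.
move=> H Hd Hp Hq.
have [->|Hpq] := eqVneq p q; first by [].
have [r [Hr Hrp Hrq]] : exists r, [/\ (r < d)%N, r != p & r != q].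
  case: (eqVneq p 0%N) => Hp0; case: (eqVneq q 0%N) => Hq0.
  - by rewrite Hp0 Hq0 in Hpq.
  - case: (eqVneq q 1%N) => Hq1; first by exists 2%N; split; rewrite ?Hp0 ?Hq1 //; lia.
    by exists 1%N; split; rewrite ?Hp0 //; lia.
  - case: (eqVneq p 1%N) => Hp1; first by exists 2%N; split; rewrite ?Hq0 ?Hp1 //; lia.
    by exists 1%N; split; rewrite ?Hq0 //; lia.
  - by exists 0%N; split; rewrite 1?eq_sym // 1?eq_sym //; lia.
pose w : seq 'I_2 := mkseq (fun k => if (k == p) || (k == q) then ord_max else ord0) d.
have Hw : size w = d by rewrite size_mkseq.
have Hw0 : has (pred1 ord0) w.
  apply/(has_nthP ord0); exists r; rewrite ?Hw // nth_mkseq //.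
  by rewrite (negbTE Hrp) (negbTE Hrq).
have := @C_single F w p H Hw0; rewrite Hw nth_mkseq // eqxx => /(_ Hp erefl) <-.
have := @C_single F w q H Hw0; rewrite Hw nth_mkseq // eqxx orbT => /(_ Hq erefl) <-.
by [].
Qed.

Definition mixed (u : seq 'I_2) := has (pred1 ord0) u && has (pred1 ord_max) u.

Lemma mixed_const F u d : cocyc F -> size u = d -> (3 <= d)%N -> mixed u ->
  F u = F (zz d 0).
Proof.
move=> H <- Hs /andP [H0 /(has_nthP ord0) [p Hp /eqP Hup]].
rewrite (C_single H H0 Hp Hup); apply: C_two => //; lia.
Qed.

Lemma classify (u : seq 'I_2) : ~~ mixed u ->
  u = nseq (size u) ord0 \/ u = nseq (size u) ord_max.
Proof.
rewrite /mixed negb_and => /orP [] /hasPn Hn.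
  right; apply/all_pred1P/allP => x Hx; apply/eqP/I2_neq0.
  exact: Hn.
left; apply/all_pred1P/allP => x Hx; apply/eqP.
have := Hn x Hx; case: (I2_cases x) => -> //=.
Qed.

Lemma mixed_size (u : seq 'I_2) : mixed u -> (2 <= size u)%N.
Proof.
case: u => [|x [|y u]] //=; rewrite /mixed /= !orbF.
by case: (I2_cases x) => ->.
Qed.

Lemma mixed_zz d : (2 <= d)%N -> mixed (zz d 0).
Proof.
move=> Hd; apply/andP; split; apply/(has_nthP ord0).
  exists 1%N; rewrite /zz ?size_mkseq ?nth_mkseq //; lia.
exists 0%N; rewrite /zz ?size_mkseq ?nth_mkseq //; lia.
Qed.

Lemma mixed_all (u : seq 'I_2) : mixed u -> all nzz0 u = false /\ all nzz1 u = false.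
Proof.
case/andP => /(has_nthP ord0) [k0 Hk0 /eqP H0] /(has_nthP ord0) [k1 Hk1 /eqP H1].
split; apply/negbTE/negP => /(all_nthP ord0) Hall.
  by have := Hall k0 Hk0; rewrite H0.
by have := Hall k1 Hk1; rewrite H1.
Qed.
End S4.

Section S5.
Variable K : fieldType.
Hypothesis hK : [pchar K] =i pred0.

Lemma eq_size_false (T : eqType) (w s : seq T) : size w != size s -> (w == s) = false.
Proof. by move=> H; apply/negbTE; apply: contra H => /eqP ->. Qed.

Lemma smul_gen n (i j : 'I_n) w :
  smul (gen i) (gen j) w = (w == [:: i; j])%:R :> K.
Proof. exact: (@smul_mono K n [:: i] [:: j] w). Qed.

Definition XX : series K 2 := sbr (gen (ord0 : 'I_2)) (gen (ord_max : 'I_2)).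

Lemma X_closed w : XX w = (w == [:: ord0; ord_max])%:R - (w == [:: ord_max; ord0])%:R.
Proof. by rewrite /XX /sbr !smul_gen. Qed.

Lemma X_size w : size w != 2%N -> XX w = 0.
Proof. by move=> H; rewrite X_closed !eq_size_false // subrr. Qed.

Lemma is_lie_X : is_lie XX.
Proof.
move=> d; case: (eqVneq d 2%N) => [->|Hd].
  have -> : Defs.hom 2 XX = XX.
    apply: functional_extensionality => w; rewrite /Defs.hom.
    by case: eqP => // /eqP H; rewrite X_size.
  by apply: lp_br; apply: lp_gen.
have -> : Defs.hom d XX = szero.
  apply: functional_extensionality => w; rewrite /Defs.hom.
  by case: eqP => // Hw; rewrite X_size // Hw.
exact: lp_zero.
Qed.

Lemma delta_X : delta XX = szero.
Proof.
apply: functional_extensionality => w; rewrite delta2E /szero.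
case: (eqVneq (size w) 2%N) => Hw; last by rewrite !X_size ?size_map // !mulr0 addr0.
case: w Hw => [|a [|b [|c w]]] // _.
case: (I3_cases a) => ->; case: (I3_cases b) => ->; rewrite !X_closed /=; ring.
Qed.


Lemma cocyc_of (f : series K 2) : delta f = szero -> cocyc f.
Proof. by move=> H v _; rewrite -delta2E H. Qed.

Lemma part3_main (f : series K 2) : is_lie f -> delta f = szero ->
  forall w, f w = f [:: ord0; ord_max] * XX w.
Proof.
move=> Hl Hd w; have Hc := cocyc_of Hd.
case Hs: (size w) => [|[|[|d]]].
- move/eqP: Hs; rewrite size_eq0 => /eqP ->.
  by rewrite is_lie_nil // X_size // mulr0.
- rewrite X_size ?Hs // mulr0.
  case: w Hs => [|x [|y w]] // _.
  by case: (I2_cases x) => ->; [apply: (C_pure0 (d:=1)) | apply: (C_pure1 (d:=1))].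
- case: w Hs => [|x [|y [|z w]]] // _.
  case: (I2_cases x) => ->; case: (I2_cases y) => ->; rewrite X_closed /=.
  + have := C_pure0 (d:=2) Hc isT; rewrite /= => ->; ring.
  + by rewrite subr0 mulr1.
  + have := @is_lie_Psi K 2 f [:: ord0; ord_max] Hl isT.
    rewrite /Psi big_ord_recr big_ord1 /= => /eqP; rewrite addrC addr_eq0 => /eqP ->.
    by rewrite sub0r mulrN1.
  + have := C_pure1 (d:=2) Hc isT; rewrite /= => ->; ring.
rewrite X_size ?Hs // mulr0.
case: (boolP (mixed w)) => Hm; last first.
  by case: (classify Hm) => ->; [apply: (C_pure0 Hc)|apply: (C_pure1 Hc)]; rewrite Hs.
rewrite (mixed_const Hc Hs) //.
set z := zz d.+3 0%N.
have Hz : size z = d.+3 by rewrite size_mkseq.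
have := @is_lie_Psi K 2 f z Hl; rewrite Hz => /(_ isT).
have key : forall u, size u = d.+3 -> mixed u -> f u = f z.
  by move=> u Hu Hmu; rewrite (mixed_const Hc Hu).
rewrite /Psi (eq_bigr (fun _ => f z)); last first.
  move=> k _; apply: key; first exact: (etrans (size_rot _ _) Hz).
  have := mixed_zz (isT : (2 <= d.+3)%N); rewrite -/z /mixed.
  by rewrite -(has_rot k z) -(has_rot k z (pred1 ord_max)).
rewrite sumr_const card_ord -mulr_natl Hz; exact: mulf_nat0.
Qed.

Lemma Psi_delta2 (f : series K 2) v : Psi v (delta f) =
  ((all nz0 v)%:R - 1) * Psi (map tau v) f + (1 - (all nz2 v)%:R) * Psi (map rho v) f.
Proof.
rewrite /Psi !size_map !mulr_sumr -big_split /=; apply: eq_bigr => k _.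
by rewrite delta2E !all_rot !map_rot.
Qed.

Definition n1 (l : 'I_3) : bool := (l : nat) != 1%N.

Lemma part4_bwd (f : series K 2) (g : series K 1) :
  tr_zero (sadd f (sopp (delta g))) -> tr_zero (delta f).
Proof.
move=> H; apply: (@TZ_of K 3 (delta f) hK) => v Hv.
have Hfg : forall u, u != [::] -> Psi u f = Psi u (delta g).
  move=> u Hu; have := TZ_imp H Hu; rewrite Psi_add Psi_opp => /eqP.
  by rewrite subr_eq0 => /eqP.
have Hm : forall s : 'I_3 -> 'I_2, map s v != [::].
  by move=> s; rewrite -size_eq0 size_map size_eq0.
rewrite Psi_delta2 !Hfg // !Psi_delta1 !size_map !all_map.
have -> : all (preim tau nzz0) v = all nz0 v && all n1 v.
  by rewrite -all_predI; apply: eq_all => l; case: (I3_cases l) => ->.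
have -> : all (preim tau nzz1) v = all nz2 v.
  by apply: eq_all => l; case: (I3_cases l) => ->.
have -> : all (preim rho nzz0) v = all nz0 v.
  by apply: eq_all => l; case: (I3_cases l) => ->.
have -> : all (preim rho nzz1) v = all n1 v && all nz2 v.
  by rewrite -all_predI; apply: eq_all => l; case: (I3_cases l) => ->.
by case: (all nz0 v); case: (all n1 v); case: (all nz2 v); rewrite /=; ring.
Qed.

Lemma part4_fwd (f : series K 2) :
  tr_zero (delta f) -> exists g : series K 1, tr_zero (sadd f (sopp (delta g))).
Proof.
move=> H.
pose F u := Psi u f.
have Hc : cocyc F by move=> v Hv; rewrite -Psi_delta2; exact: TZ_imp H v Hv.
pose g : series K 1 := fun w =>
  if (2 <= size w)%N then - F (zz (size w) 0) / (size w)%:R else 0.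
exists g; apply: (@TZ_of K 2 _ hK) => u Hu.
rewrite Psi_add Psi_opp Psi_delta1 -/(F u).
have d0 : (0 < size u)%N by rewrite lt0n size_eq0.
case: (boolP (mixed u)) => Hm; last first.
  case: (classify Hm) => Hu'.
    have -> : F u = 0 by rewrite Hu'; apply: C_pure0.
    rewrite Hu' !all_nseq size_nseq -[size u == 0%N]negbK -lt0n d0 /=.
    ring.
  have -> : F u = 0 by rewrite Hu'; apply: C_pure1.
  rewrite Hu' !all_nseq size_nseq -[size u == 0%N]negbK -lt0n d0 /=.
  ring.
have d2 := mixed_size Hm.
case: (mixed_all Hm) => -> ->.
rewrite /g size_nseq d2.
have -> : F u = F (zz (size u) 0).
  case: (ltngtP (size u) 2) => Hs; first by rewrite ltnNge d2 in Hs.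
    by apply: (mixed_const Hc).
  case: u Hu Hm d0 d2 Hs => [|x [|y [|z u]]] // _ Hm _ _ _.
  move: Hm; case: (I2_cases x) => ->; case: (I2_cases y) => -> // _.
  by rewrite /F -Psi_rot1.
set e := F _.
have dn := natr_nz hK d0.
by rewrite sub0r addr0 mulN1r mulNr opprK mulrCA divff // mulr1 subrr.
Qed.
End S5.

Unset Implicit Arguments.
Set Strict Implicit.

Theorem theorem2p7 (K : fieldType) (hK : [pchar K] =i pred0) :
  (* (1) ker(delta : lie_1 -> lie_2) = lie_1 *)
  (forall f : series K 1, is_lie f -> delta f = szero)
  /\
  (* (2) ker(delta : tr_1 -> tr_2) = k Tr(x) *)
  (forall f : series K 1,
     tr_zero (delta f) <->
     exists c : K, tr_zero (sadd f (sopp (sscale c (gen (ord0 : 'I_1))))))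
  /\
  (* (3) ker(delta: lie_2 -> lie_3) / im(delta: lie_1 -> lie_2) is
         one-dimensional, spanned by the class of [x,y] *)
  (let X : series K 2 := sbr (gen (ord0 : 'I_2)) (gen (ord_max : 'I_2)) in
   is_lie X /\ delta X = szero /\
   ~ (exists g : series K 1, is_lie g /\ delta g = X) /\
   (forall f : series K 2, is_lie f -> delta f = szero ->
      exists (c : K) (g : series K 1),
        is_lie g /\ f = sadd (sscale c X) (delta g)))
  /\
  (* (4) ker(delta : tr_2 -> tr_3) = im(delta : tr_1 -> tr_2) *)
  (forall f : series K 2,
     tr_zero (delta f) <->
     exists g : series K 1, tr_zero (sadd f (sopp (delta g)))).
Proof.
split; first exact: (@part1 K hK).
split; first exact: (@part2 K hK).
split.
  move=> X; rewrite /X.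
  split; first exact: (@is_lie_X K).
  split; first exact: (@delta_X K).
  split.
    case=> g [Hg Hdg].
    have := @part1 K hK g Hg; rewrite Hdg => H0.
    have := congr1 (fun h => h [:: ord0; ord_max]) H0.
    rewrite -/(@XX K) X_closed /= /szero subr0 => /eqP.
    by rewrite oner_eq0.
  move=> f Hf Hd; exists (f [:: ord0; ord_max]), szero; split.
    move=> d; have -> : Defs.hom d (@szero K 1) = szero.
      by apply: functional_extensionality => w; rewrite /Defs.hom; case: ifP.
    exact: lp_zero.
  apply: functional_extensionality => w.
  rewrite /sadd /sscale (@part3_main K hK f Hf Hd w) (@delta1E K szero w) /szero.
  rewrite -/(@XX K); ring.
split; first exact: (@part4_fwd K hK).
by case=> g; exact: (@part4_bwd K hK f g).
Qed.
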